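(* Let $F$ be an Archimedean vector lattice and $E$ a regular sublattice of $F$. Then the order adherence $\overline{E}^{1}_{o}$ of $E$ is a regular sublattice of $F$ in which $E$ is order dense, and every regular sublattice $H$ of $F$ in which $E$ is order dense satisfies $H\subset\overline{E}^{1}_{o}$.
   Context: A net order converges to $f$ if there is a set $G$ with $\bigwedge G=0$ such that for each $g\in G$ the net is eventually in $[f-g,f+g]$. The order adherence $\overline{E}^1_o$ is the set of order limits (in $F$) of nets in $E$. A sublattice $E\subset F$ is regular if for every $G\subset E$ with $\bigwedge_E G=0$ one has $\bigwedge_F G=0$. $E$ is order dense in a sublattice $H\supset E$ if for every $h\in H$ with $h>0$ there is $e\in E$ with $0<e\le h$. *)

(* Defs.v *)
From HB Require Import structures.
From mathcomp Require Import all_boot all_order all_algebra.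
From mathcomp Require Import reals.
Set Implicit Arguments. Unset Strict Implicit. Unset Printing Implicit Defensive.
Import Order.TTheory GRing.Theory Num.Theory.
Local Open Scope ring_scope.

Section VectorLattice.
Variables (R : realType) (V : lmodType R) (le : V -> V -> Prop).

Definition is_lower_bound (G : V -> Prop) (x : V) := forall g, G g -> le x g.
Definition is_upper_bound (G : V -> Prop) (x : V) := forall g, G g -> le g x.

Definition is_inf_in (A G : V -> Prop) (x : V) :=
  A x /\ is_lower_bound G x /\ (forall y, A y -> is_lower_bound G y -> le y x).
Definition is_sup_in (A G : V -> Prop) (x : V) :=
  A x /\ is_upper_bound G x /\ (forall y, A y -> is_upper_bound G y -> le x y).

Definition full : V -> Prop := fun _ => True.
Definition pair2 (x y : V) : V -> Prop := fun z => z = x \/ z = y.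

Definition vector_lattice :=
  (forall x, le x x) /\
  (forall x y, le x y -> le y x -> x = y) /\
  (forall x y z, le x y -> le y z -> le x z) /\
  (forall x y z, le x y -> le (x + z) (y + z)) /\
  (forall (a : R) x y, 0 <= a -> le x y -> le (a *: x) (a *: y)) /\
  (forall x y, (exists s, is_sup_in full (pair2 x y) s) /\
               (exists i, is_inf_in full (pair2 x y) i)).

Definition archimedean :=
  forall x y, le 0 x -> (forall n : nat, le (n%:R *: x) y) -> x = 0.

Definition lt x y := le x y /\ x <> y.

Definition sublattice (E : V -> Prop) :=
  [/\ E 0,
      (forall x y, E x -> E y -> E (x + y)),
      (forall (a : R) x, E x -> E (a *: x)),
      (forall x y s, E x -> E y -> is_sup_in full (pair2 x y) s -> E s) &
      (forall x y i, E x -> E y -> is_inf_in full (pair2 x y) i -> E i)].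

Definition regular (E : V -> Prop) :=
  forall G : V -> Prop, (forall g, G g -> E g) ->
    is_inf_in E G 0 -> is_inf_in full G 0.

Definition in_interval (a b x : V) := le a x /\ le x b.

Definition directed (I : Type) (leI : I -> I -> Prop) :=
  [/\ inhabited I, (forall i, leI i i),
      (forall i j k, leI i j -> leI j k -> leI i k) &
      (forall i j, exists k, leI i k /\ leI j k)].

Definition order_converges (I : Type) (leI : I -> I -> Prop) (x : I -> V) (f : V) :=
  exists G : V -> Prop, is_inf_in full G 0 /\
    forall g, G g -> exists i0, forall i, leI i0 i -> in_interval (f - g) (f + g) (x i).

Definition order_adherence (E : V -> Prop) : V -> Prop := fun f =>
  exists (I : Type) (leI : I -> I -> Prop) (x : I -> V),
    directed leI /\ (forall i, E (x i)) /\ order_converges leI x f.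

Definition order_dense_in (E H : V -> Prop) :=
  (forall e, E e -> H e) /\
  (forall h, H h -> lt 0 h -> exists e, E e /\ lt 0 e /\ le e h).

End VectorLattice.

(* Main.v *)
Require Import Defs.
From HB Require Import structures.
From mathcomp Require Import all_boot all_order all_algebra.
From mathcomp Require Import reals.
From Stdlib Require Import Classical ClassicalEpsilon.
Import Order.TTheory GRing.Theory Num.Theory.
Local Open Scope ring_scope.

Section Proof9.
Set Implicit Arguments. Unset Strict Implicit.
Variables (R : realType) (V : lmodType R) (le : V -> V -> Prop).
Hypothesis hVL : vector_lattice le.
Hypothesis hArch : archimedean le.
Local Notation full := (@full R V).

Lemma lrefl x : le x x. Proof. by case: hVL. Qed.
Lemma lanti x y : le x y -> le y x -> x = y. Proof. case: hVL => _ [H _]; exact: H. Qed.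
Lemma ltr x y z : le x y -> le y z -> le x z. Proof. case: hVL => _ [_ [H _]]; exact: H. Qed.
Lemma laddr x y z : le x y -> le (x + z) (y + z). Proof. case: hVL => _ [_ [_ [H _]]]; exact: H. Qed.
Lemma lsc (a : R) x y : 0 <= a -> le x y -> le (a *: x) (a *: y).
Proof. case: hVL => _ [_ [_ [_ [H _]]]]; exact: H. Qed.
Lemma exsup x y : exists s, is_sup_in le full (pair2 x y) s.
Proof. by case: hVL => _ [_ [_ [_ [_ H]]]]; case: (H x y). Qed.
Lemma exinf x y : exists s, is_inf_in le full (pair2 x y) s.
Proof. by case: hVL => _ [_ [_ [_ [_ H]]]]; case: (H x y). Qed.

Lemma laddl x y z : le x y -> le (z + x) (z + y).
Proof. by move=> H; rewrite ![z + _]addrC; apply: laddr. Qed.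
Lemma ladd2 a b c d : le a b -> le c d -> le (a + c) (b + d).
Proof. move=> H1 H2; apply: (ltr (laddr c H1)); exact: laddl. Qed.
Lemma lsubl a b c : le (a - c) b -> le a (b + c).
Proof. by move=> H; have := laddr c H; rewrite subrK. Qed.
Lemma llsub a b c : le a (b + c) -> le (a - c) b.
Proof. by move=> H; have := laddr (- c) H; rewrite addrK. Qed.
Lemma lsubr a b c : le a (b - c) -> le (a + c) b.
Proof. by move=> H; have := laddr c H; rewrite subrK. Qed.
Lemma lrsub a b c : le (a + c) b -> le a (b - c).
Proof. by move=> H; have := laddr (- c) H; rewrite addrK. Qed.
Lemma lopp x y : le x y -> le (- y) (- x).
Proof.
move=> H; have := laddr (- x - y) H.
have ->: y + (- x - y) = - x by rewrite addrC subrK.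
by have ->: x + (- x - y) = - y by rewrite addrA subrr sub0r.
Qed.
Lemma lpos a b c : le 0 c -> le a b -> le a (b + c).
Proof. move=> Hc H; by have := ladd2 H Hc; rewrite addr0. Qed.
Lemma lposl a b c : le 0 c -> le a b -> le (a - c) b.
Proof. move=> Hc H; apply: llsub; exact: lpos. Qed.
Lemma l0sub x y : le x y -> le 0 (y - x).
Proof. by move=> H; apply: lrsub; rewrite add0r. Qed.
Lemma lsub0 x y : le 0 (y - x) -> le x y.
Proof. by move=> H; have := lsubr H; rewrite add0r. Qed.

Lemma inf0_ge G g : is_inf_in le full G 0 -> G g -> le 0 g.
Proof. by case=> _ [H _]; apply: H. Qed.
Lemma inf0_lb G y : is_inf_in le full G 0 -> (forall g, G g -> le y g) -> le y 0.
Proof. by case=> _ [_ H] Hy; apply: H. Qed.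

Lemma sup_l x y s : is_sup_in le full (pair2 x y) s -> le x s.
Proof. by case=> _ [H _]; apply: H; left. Qed.
Lemma sup_r x y s : is_sup_in le full (pair2 x y) s -> le y s.
Proof. by case=> _ [H _]; apply: H; right. Qed.
Lemma sup_min x y s u : is_sup_in le full (pair2 x y) s -> le x u -> le y u -> le s u.
Proof. by case=> _ [_ H] h1 h2; apply: H => // z [->|->]. Qed.
Lemma inf_l x y s : is_inf_in le full (pair2 x y) s -> le s x.
Proof. by case=> _ [H _]; apply: H; left. Qed.
Lemma inf_r x y s : is_inf_in le full (pair2 x y) s -> le s y.
Proof. by case=> _ [H _]; apply: H; right. Qed.
Lemma inf_max x y s u : is_inf_in le full (pair2 x y) s -> le u x -> le u y -> le u s.
Proof. by case=> _ [_ H] h1 h2; apply: H => // z [->|->]. Qed.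

Definition vsup x y : V := proj1_sig (constructive_indefinite_description _ (exsup x y)).
Lemma vsupP x y : is_sup_in le full (pair2 x y) (vsup x y).
Proof. by rewrite /vsup; case: constructive_indefinite_description. Qed.
Definition vinf x y : V := proj1_sig (constructive_indefinite_description _ (exinf x y)).
Lemma vinfP x y : is_inf_in le full (pair2 x y) (vinf x y).
Proof. by rewrite /vinf; case: constructive_indefinite_description. Qed.

Lemma inf_neg i f h : is_inf_in le full (pair2 f h) i -> is_sup_in le full (pair2 (-f) (-h)) (-i).
Proof.
move=> Hi; split => //; split.
  by move=> z [->|->]; apply: lopp; [apply: inf_l Hi| apply: inf_r Hi].
move=> y _ Hy; rewrite -[y]opprK; apply: lopp; apply: (inf_max Hi).
  by rewrite -[f]opprK; apply: lopp; apply: Hy; left.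
by rewrite -[h]opprK; apply: lopp; apply: Hy; right.
Qed.

Lemma arch_step (P : V -> Prop) e h : P 0 -> (forall a, P a -> P (a + e)) ->
  (forall a, P a -> le a h) -> le 0 e -> e = 0.
Proof.
move=> P0 Ps Ph e0; apply: (hArch e0) => n; apply: Ph.
elim: n => [|n IH]; first by rewrite scale0r.
by rewrite mulrSr scalerDl scale1r; apply: Ps.
Qed.
Variable E : V -> Prop.
Hypothesis hE : sublattice le E.
Local Notation Ebar := (order_adherence le E).

Lemma E0 : E 0. Proof. by case: hE. Qed.
Lemma Eadd x y : E x -> E y -> E (x + y). Proof. case: hE => _ H _ _ _; exact: H. Qed.
Lemma Esc (a : R) x : E x -> E (a *: x). Proof. case: hE => _ _ H _ _; exact: H. Qed.
Lemma Eopp x : E x -> E (- x). Proof. by move=> H; rewrite -scaleN1r; apply: Esc. Qed.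
Lemma Esub x y : E x -> E y -> E (x - y). Proof. by move=> H1 H2; apply: Eadd => //; apply: Eopp. Qed.
Lemma Esup x y : E x -> E y -> E (vsup x y).
Proof. by case: hE => _ _ _ H _ h1 h2; apply: (H x y) => //; apply: vsupP. Qed.
Lemma Einf x y : E x -> E y -> E (vinf x y).
Proof. by case: hE => _ _ _ _ H h1 h2; apply: (H x y) => //; apply: vinfP. Qed.

Lemma Ebar_E f : E f -> Ebar f.
Proof.
move=> Ef; exists unit, (fun _ _ => True), (fun _ => f); split; [|split].
- split; [exact: (inhabits tt)|done|done|by move=> i j; exists tt].
- by [].
- exists (fun g => g = 0); split.
    split => //; split; first by move=> g ->; apply: lrefl.
    by move=> y _ H; exact: (H 0 erefl).
  by move=> g ->; exists tt => i _; rewrite subr0 addr0; split; apply: lrefl.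
Qed.

Definition Gsum (G1 G2 : V -> Prop) : V -> Prop :=
  fun g => exists g1 g2, G1 g1 /\ G2 g2 /\ g = g1 + g2.

Lemma inf_sum G1 G2 : is_inf_in le full G1 0 -> is_inf_in le full G2 0 ->
  is_inf_in le full (Gsum G1 G2) 0.
Proof.
move=> h1 h2; split => //; split.
  move=> g [g1 [g2 [k1 [k2 ->]]]]; rewrite -[0](addr0 0).
  by apply: ladd2; [apply: inf0_ge h1 k1| apply: inf0_ge h2 k2].
move=> y _ Hy; apply: (inf0_lb h2) => g2 k2.
have: le (y - g2) 0.
  apply: (inf0_lb h1) => g1 k1; apply: llsub; apply: Hy.
  by exists g1, g2.
by move/lsubl; rewrite add0r.
Qed.

Lemma dir_prod I1 I2 (l1 : I1 -> I1 -> Prop) (l2 : I2 -> I2 -> Prop) :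
  directed l1 -> directed l2 ->
  directed (fun p q : I1 * I2 => l1 p.1 q.1 /\ l2 p.2 q.2).
Proof.
case=> [[i1] r1 t1 u1] [[i2] r2 t2 u2]; split.
- exact: (inhabits (i1, i2)).
- by move=> i; split.
- by move=> i j k [a b] [c d]; split; [apply: t1 a c| apply: t2 b d].
- move=> [a b] [c d]; case: (u1 a c) => k [k1 k2]; case: (u2 b d) => k' [k3 k4].
  by exists (k, k'); split; split.
Qed.

Lemma Ebar_bin (op : V -> V -> V) f h t :
  (forall x y, E x -> E y -> E (op x y)) ->
  (forall x y g1 g2, le 0 g1 -> le 0 g2 -> in_interval le (f - g1) (f + g1) x ->
     in_interval le (h - g2) (h + g2) y ->
     in_interval le (t - (g1 + g2)) (t + (g1 + g2)) (op x y)) ->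
  Ebar f -> Ebar h -> Ebar t.
Proof.
move=> Eop Hop [I1 [l1 [x1 [d1 [e1 [G1 [i1 c1]]]]]]] [I2 [l2 [x2 [d2 [e2 [G2 [i2 c2]]]]]]].
exists (I1 * I2)%type, (fun p q => l1 p.1 q.1 /\ l2 p.2 q.2), (fun p => op (x1 p.1) (x2 p.2)).
split; first exact: dir_prod.
split; first by move=> p; apply: Eop.
exists (Gsum G1 G2); split; first exact: inf_sum.
move=> g [g1 [g2 [k1 [k2 ->]]]].
case: (c1 _ k1) => j1 J1; case: (c2 _ k2) => j2 J2.
exists (j1, j2) => [[a b]] /= [ha hb]; apply: Hop.
- exact: inf0_ge i1 k1.
- exact: inf0_ge i2 k2.
- exact: J1.
- exact: J2.
Qed.

Lemma Ebar_add f h : Ebar f -> Ebar h -> Ebar (f + h).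
Proof.
apply: Ebar_bin; first exact: Eadd.
move=> x y g1 g2 _ _ [a1 b1] [a2 b2]; split.
  by rewrite opprD addrACA; apply: ladd2.
by rewrite addrACA; apply: ladd2.
Qed.

Lemma Ebar_sup f h s : Ebar f -> Ebar h -> is_sup_in le full (pair2 f h) s -> Ebar s.
Proof.
move=> Hf Hh Hs; apply: (Ebar_bin (op := vsup)) Hf Hh; first exact: Esup.
move=> x y g1 g2 p1 p2 [a1 b1] [a2 b2]; split.
- apply: llsub; apply: (sup_min Hs).
  + apply: (ltr (lsubl a1)); rewrite addrA; apply: lpos => //.
    by apply: laddr; apply: sup_l (vsupP x y).
  + apply: (ltr (lsubl a2)); rewrite [g1 + g2]addrC addrA; apply: lpos => //.
    by apply: laddr; apply: sup_r (vsupP x y).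
- apply: (sup_min (vsupP x y)).
  + apply: (ltr b1); rewrite addrA; apply: lpos => //; apply: laddr; exact: sup_l Hs.
  + apply: (ltr b2); rewrite [g1 + g2]addrC addrA; apply: lpos => //; apply: laddr; exact: sup_r Hs.
Qed.

Lemma Ebar_opp f : Ebar f -> Ebar (- f).
Proof.
move=> [I [l [x [d [e [G [i c]]]]]]].
exists I, l, (fun j => - x j); split => //; split; first by move=> j; apply: Eopp.
exists G; split => // g Gg; case: (c _ Gg) => j0 J; exists j0 => j hj.
case: (J _ hj) => a b; split.
  by rewrite -opprD; apply: lopp.
by rewrite -[- f + g]opprK opprD opprK; apply: lopp.
Qed.

Lemma Ebar_inf f h s : Ebar f -> Ebar h -> is_inf_in le full (pair2 f h) s -> Ebar s.
Proof.
move=> Hf Hh Hs; rewrite -[s]opprK; apply: Ebar_opp.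
by apply: (Ebar_sup (Ebar_opp Hf) (Ebar_opp Hh)); apply: inf_neg.
Qed.

Lemma Ebar_scpos (a : R) f : 0 <= a -> Ebar f -> Ebar (a *: f).
Proof.
move=> a0 [I [l [x [d [e [G [i c]]]]]]].
exists I, l, (fun j => a *: x j); split => //; split; first by move=> j; apply: Esc.
exists (fun g' => exists g, G g /\ g' = (a + 1) *: g); split.
  split => //; split.
    move=> g' [g [Gg ->]]; rewrite -(scaler0 _ (a + 1)); apply: lsc.
      by rewrite addr_ge0.
    exact: inf0_ge i Gg.
  move=> y _ Hy.
  have a1 : 0 < a + 1 by rewrite ltr_wpDl.
  have: le ((a + 1)^-1 *: y) 0.
    apply: (inf0_lb i) => g Gg.
    have ia : 0 <= (a + 1)^-1 by rewrite invr_ge0 ltW.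
    have := lsc ia (Hy _ (ex_intro _ g (conj Gg erefl))).
    by rewrite scalerA mulVf ?scale1r // gt_eqF.
  move/(lsc (ltW a1)); rewrite scalerA divff ?scale1r ?scaler0 ?gt_eqF //.
move=> g' [g [Gg ->]]; case: (c _ Gg) => j0 J; exists j0 => j hj.
case: (J _ hj) => p q.
have g0 := inf0_ge i Gg.
have Hle : le (a *: g) ((a + 1) *: g).
  by rewrite scalerDl scale1r; apply: lpos g0 (lrefl _).
split.
  apply: (ltr _ (lsc a0 p)); rewrite scalerBr; apply: laddl; exact: lopp Hle.
apply: (ltr (lsc a0 q)); rewrite scalerDr; exact: laddl.
Qed.
Lemma sl0 S : sublattice le S -> S 0. Proof. by case. Qed.
Lemma sladd S x y : sublattice le S -> S x -> S y -> S (x + y).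
Proof. case=> _ H _ _ _; exact: H. Qed.
Lemma slsc S (a : R) x : sublattice le S -> S x -> S (a *: x).
Proof. case=> _ _ H _ _; exact: H. Qed.
Lemma slsub S x y : sublattice le S -> S x -> S y -> S (x - y).
Proof. move=> hS h1 h2; apply: sladd => //; rewrite -scaleN1r; exact: slsc. Qed.
Lemma slsup S x y : sublattice le S -> S x -> S y -> S (vsup x y).
Proof. case=> _ _ _ H _ h1 h2; apply: (H x y) => //; apply: vsupP. Qed.

Lemma Ebar_sc (a : R) f : Ebar f -> Ebar (a *: f).
Proof.
move=> Hf; case: (lerP 0 a) => a0; first exact: Ebar_scpos.
rewrite -[a]opprK scaleNr; apply: Ebar_opp; apply: Ebar_scpos => //.
by rewrite oppr_ge0 ltW.
Qed.

Lemma Ebar_sl : sublattice le Ebar.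
Proof.
split.
- exact: Ebar_E E0.
- exact: Ebar_add.
- exact: Ebar_sc.
- exact: Ebar_sup.
- exact: Ebar_inf.
Qed.

Hypothesis hreg : regular le E.

Lemma get_k K v : is_inf_in le full K 0 -> le 0 v -> v <> 0 ->
  exists k0, K k0 /\ ~ le v k0.
Proof.
move=> iK v0 vne; apply: NNPP => H; apply: vne; apply: lanti _ v0.
apply: (inf0_lb iK) => k Kk; apply: NNPP => nk; apply: H; by exists k.
Qed.

Lemma get_lb D : (forall z, D z -> E z) -> (forall z, D z -> le 0 z) ->
  ~ is_inf_in le full D 0 ->
  exists e, E e /\ le 0 e /\ e <> 0 /\ (forall z, D z -> le e z).
Proof.
move=> DE D0 nF.
have nE : ~ is_inf_in le E D 0 by move=> H; apply: nF; apply: hreg.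
have [y [Ey [Ly ny]]] : exists y, E y /\ is_lower_bound le D y /\ ~ le y 0.
  apply: NNPP => H; apply: nE; split; first exact: E0.
  split; first exact: D0.
  move=> y Ey Ly; apply: NNPP => ny; apply: H; by exists y.
exists (vsup y 0); split; first by apply: Esup => //; apply: E0.
split; first exact: sup_r (vsupP _ _).
split.
  by move=> e0; apply: ny; have := sup_l (vsupP y 0); rewrite e0.
move=> z Dz; apply: (sup_min (vsupP y 0)); [exact: Ly | exact: D0].
Qed.

Lemma Ebar_dense f : Ebar f -> lt le 0 f -> exists e, E e /\ lt le 0 e /\ le e f.
Proof.
move=> [I [l [x [d [ex [K [iK cK]]]]]]] [f0 fne].
have [k0 [Kk0 nk0]] := get_k iK f0 (fun H => fne (esym H)).
case: (cK _ Kk0) => b0 B0.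
pose D := fun z => exists b, l b0 b /\ z = vsup (x b) 0.
have [e [Ee [e0 [ene eD]]]] : exists e, E e /\ le 0 e /\ e <> 0 /\ (forall z, D z -> le e z).
  apply: get_lb.
  - by move=> z [b [_ ->]]; apply: Esup => //; apply: E0.
  - by move=> z [b [_ ->]]; exact: sup_r (vsupP _ _).
  move=> HD; apply: nk0.
  have: le (f - k0) 0.
    apply: (inf0_lb HD) => z [b [hb ->]]; case: (B0 _ hb) => p _.
    exact: ltr p (sup_l (vsupP _ _)).
  by move/lsubl; rewrite add0r.
exists e; split => //; split; first by split => // H; apply: ene.
have: le (e - f) 0.
  apply: (inf0_lb iK) => k Kk; case: (cK _ Kk) => bk Bk.
  case: d => _ _ _ u; case: (u b0 bk) => b [hb0 hbk].
  apply: llsub; rewrite addrC; apply: (ltr (eD _ (ex_intro _ b (conj hb0 erefl)))).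
  apply: (sup_min (vsupP _ _)); first by case: (Bk _ hbk).
  by rewrite -[0](addr0 0); apply: ladd2 => //; apply: inf0_ge iK Kk.
by move/lsubl; rewrite add0r.
Qed.

Lemma Ebar_supA h u : Ebar h -> le 0 h ->
  (forall a, E a -> le 0 a -> le a h -> le a u) -> le h u.
Proof.
move=> [I [l [x [d [ex [K [iK cK]]]]]]] h0 Hu.
pose u' := vinf u h.
have Hu' : forall a, E a -> le 0 a -> le a h -> le a u'.
  by move=> a Ea a0 ah; apply: (inf_max (vinfP u h)) => //; apply: Hu.
suff : h - u' = 0.
  by move/eqP; rewrite subr_eq0 => /eqP ->; exact: inf_l (vinfP u h).
pose v := h - u'.
have v0 : le 0 v by apply: l0sub; exact: inf_r (vinfP u h).
apply: NNPP => vne.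
have [k0 [Kk0 nk0]] := get_k iK v0 vne.
case: (cK _ Kk0) => b0 B0.
pose D := fun z => exists a b, E a /\ le 0 a /\ le a h /\ l b0 b /\ z = vsup (x b - a) 0.
have [e [Ee [e0 [ene eD]]]] : exists e, E e /\ le 0 e /\ e <> 0 /\ (forall z, D z -> le e z).
  apply: get_lb.
  - move=> z [a [b [Ea [_ [_ [_ ->]]]]]]; apply: Esup; [exact: Esub | exact: E0].
  - by move=> z [a [b [_ [_ [_ [_ ->]]]]]]; exact: sup_r (vsupP _ _).
  move=> HD; apply: nk0.
  have: le (v - k0) 0.
    apply: (inf0_lb HD) => z [a [b [Ea [a0 [ah [hb ->]]]]]].
    apply: ltr (sup_l (vsupP _ _)); case: (B0 _ hb) => p _.
    have va : le (v + a) h.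
      apply: lsubr; apply: laddl; apply: lopp; exact: Hu'.
    apply: lrsub; rewrite addrAC; exact: ltr (laddr (- k0) va) p.
  by move/lsubl; rewrite add0r.
apply: ene.
apply: (arch_step (P := fun a => E a /\ le 0 a /\ le a h) (h := h)) => //.
- by split; [exact: E0 | split; [exact: lrefl | exact: h0]].
- move=> a [Ea [a0 ah]]; split; first exact: Eadd.
  split; first by rewrite -[0](addr0 0); apply: ladd2.
  have: le (a + e - h) 0.
    apply: (inf0_lb iK) => k Kk; case: (cK _ Kk) => bk Bk.
    case: d => _ _ _ uu; case: (uu b0 bk) => b [hb0 hbk].
    have k0' := inf0_ge iK Kk.
    have := eD _ (ex_intro _ a (ex_intro _ b (conj Ea (conj a0 (conj ah (conj hb0 erefl)))))).
    move=> H1.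
    have H2 : le (vsup (x b - a) 0) (h + k - a).
      apply: (sup_min (vsupP _ _)).
        by apply: laddr; case: (Bk _ hbk).
      apply: l0sub; apply: ltr ah (lpos k0' (lrefl h)).
    have := ltr H1 H2; move/lsubr; rewrite addrC [h + k]addrC; exact: llsub.
  by move/lsubl; rewrite add0r.
- by move=> a [_ [_ ah]].
Qed.

Lemma sum_le_sup a w u : le 0 a -> le 0 w -> vinf w a = 0 -> le a u -> le w u ->
  le (a + w) u.
Proof.
move=> a0 w0 i0 au wu.
apply: ltr (sup_min (vsupP a w) au wu).
have: le (a + w - vsup a w) (vinf w a).
  apply: (inf_max (vinfP w a)).
    by apply: llsub; rewrite addrC; apply: laddl; exact: sup_l (vsupP a w).
  by apply: llsub; apply: laddl; exact: sup_r (vsupP a w).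
by rewrite i0 => /lsubl; rewrite add0r.
Qed.

Lemma lsub_cancel c x y : le (c - x) (c - y) -> le y x.
Proof. by move=> H; have := lopp (laddl (- c) H); rewrite !addKr !opprK. Qed.

Lemma Ebar_reg : regular le Ebar.
Proof.
move=> G GE HG; split => //; split; first by case: HG => _ [].
have G0 : forall g, G g -> le 0 g by case: HG => _ [].
move=> y _ Ly; apply: NNPP => ny.
pose w := vsup y 0.
have w0 : le 0 w by exact: sup_r (vsupP _ _).
have wne : w <> 0 by move=> e0; apply: ny; have := sup_l (vsupP y 0); rewrite -/w e0.
have wLG : forall g, G g -> le w g.
  by move=> g Gg; apply: (sup_min (vsupP _ _)); [exact: Ly | exact: G0].
case: (classic (exists g0, G g0)) => [[g0 Gg0] | nG]; last first.
  apply: wne; apply: lanti _ w0.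
  have: is_inf_in le full (fun _ => False) 0.
    apply: hreg => //; split; first exact: E0.
    split => // z Ez _; case: HG => _ [_ H]; apply: H; first exact: Ebar_E.
    by move=> g Gg; exfalso; apply: nG; exists g.
  by move=> H; apply: (inf0_lb H).
have [a0 [Ea0 [a00 [a0g0 na0]]]] :
    exists a0, E a0 /\ le 0 a0 /\ le a0 g0 /\ vinf w a0 <> 0.
  apply: NNPP => H; apply: wne.
  have: le g0 (g0 - w).
    apply: (Ebar_supA (GE _ Gg0) (G0 _ Gg0)) => a Ea a0 ag0.
    have i0 : vinf w a = 0.
      by apply: NNPP => ne; apply: H; exists a.
    apply: lrsub; apply: sum_le_sup => //; exact: wLG.
  move/l0sub; rewrite addrAC subrr add0r => /lopp; rewrite opprK oppr0 => H'.
  exact: lanti H' w0.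
pose w1 := vinf w a0.
have w10 : le 0 w1 by apply: (inf_max (vinfP _ _)).
have w1G : forall g, G g -> le w1 g by move=> g Gg; apply: ltr (inf_l (vinfP _ _)) (wLG _ Gg).
have w1a : le w1 a0 by exact: inf_r (vinfP _ _).
pose D := fun z => exists g m a, G g /\ is_inf_in le full (pair2 g a0) m /\
  E a /\ le 0 a /\ le a (a0 - m) /\ z = a0 - a.
have Dm : forall g m a, is_inf_in le full (pair2 g a0) m -> le a (a0 - m) -> le m (a0 - a).
  by move=> g m a _ H; apply: lrsub; rewrite addrC; apply: lsubr.
have [e [Ee [e0 [ene eD]]]] : exists e, E e /\ le 0 e /\ e <> 0 /\ (forall z, D z -> le e z).
  apply: get_lb.
  - by move=> z [g [m [a [_ [_ [Ea [_ [_ ->]]]]]]]]; apply: Esub.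
  - move=> z [g [m [a [Gg [Hm [Ea [_ [am ->]]]]]]]].
    apply: ltr (Dm _ _ _ Hm am); apply: (inf_max Hm) => //; exact: G0.
  move=> HD; apply: na0; apply: lanti _ w10.
  apply: (inf0_lb HD) => z [g [m [a [Gg [Hm [Ea [_ [am ->]]]]]]]].
  apply: ltr (Dm _ _ _ Hm am); apply: (inf_max Hm) => //; exact: w1G.
apply: ene; apply: lanti _ e0.
case: HG => _ [_ HG3]; apply: HG3; first exact: Ebar_E.
move=> g Gg.
pose m := vinf g a0.
have Hm := vinfP g a0.
apply: ltr (inf_l Hm).
have Hh : Ebar (a0 - m).
  apply: Ebar_add; first exact: Ebar_E.
  by apply: Ebar_opp; apply: (Ebar_inf (GE _ Gg) (Ebar_E Ea0) Hm).
have h0 : le 0 (a0 - m) by apply: l0sub; exact: inf_r Hm.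
have := Ebar_supA Hh h0 (u := a0 - e).
move=> H; apply: (lsub_cancel (c := a0)); apply: H => a Ea a0' am.
have := eD (a0 - a) (ex_intro _ g (ex_intro _ m (ex_intro _ a
   (conj Gg (conj Hm (conj Ea (conj a0' (conj am erefl)))))))).
by move=> H2; apply: lrsub; rewrite addrC; apply: lsubr.
Qed.
Lemma H_pos H p : sublattice le H -> regular le H -> order_dense_in le E H ->
  H p -> le 0 p -> Ebar p.
Proof.
move=> hH rH [EH dH] Hp p0.
pose I := {a : V | E a /\ le 0 a /\ le a p}.
have i0 : E 0 /\ le 0 0 /\ le 0 p by split; [exact: E0 | split; [exact: lrefl|]].
exists I, (fun a b : I => le (proj1_sig a) (proj1_sig b)), (fun a : I => proj1_sig a).
split.
  split.
  - exact: (inhabits (exist _ 0 i0 : I)).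
  - by move=> i; apply: lrefl.
  - by move=> i j k; apply: ltr.
  - move=> [a [Ea [a0 ap]]] [b [Eb [b0 bp]]].
    have Hs : E (vsup a b) /\ le 0 (vsup a b) /\ le (vsup a b) p.
      split; first exact: Esup.
      split; first exact: ltr a0 (sup_l (vsupP _ _)).
      exact: sup_min (vsupP _ _) ap bp.
    exists (exist _ (vsup a b) Hs : I) => /=; split; [exact: sup_l (vsupP _ _) | exact: sup_r (vsupP _ _)].
split; first by move=> i; case: (proj2_sig i).
exists (fun k => exists a : I, k = p - proj1_sig a); split.
  apply: rH.
    by move=> k [a ->]; case: (proj2_sig a) => Ea _; apply: slsub => //; exact: EH.
  split; first exact: sl0 hH.
  split; first by move=> k [a ->]; case: (proj2_sig a) => _ [_ ap]; exact: l0sub.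
  move=> y Hy Ly; apply: NNPP => ny.
  pose y' := vsup y 0.
  have Hy' : H y' by apply: slsup => //; exact: sl0 hH.
  have y'0 : le 0 y' by exact: sup_r (vsupP _ _).
  have y'ne : 0 <> y' by move=> e0; apply: ny; have := sup_l (vsupP y 0); rewrite -/y' -e0.
  case: (dH _ Hy' (conj y'0 y'ne)) => e [Ee [[e0 ene] ey]].
  apply: ene; apply: esym.
  apply: (arch_step (P := fun a => E a /\ le 0 a /\ le a p) (h := p)) => //.
  - move=> a [Ea [a0 ap]]; split; first exact: Eadd.
    split; first by rewrite -[0](addr0 0); apply: ladd2.
    have Ha : le y' (p - a).
      apply: (sup_min (vsupP _ _)); last exact: l0sub.
      by apply: Ly; exists (exist _ a (conj Ea (conj a0 ap)) : I).
    have := ltr ey Ha => /lsubr; by rewrite addrC.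
  - by move=> a [_ [_ ap]].
move=> k [a ->]; exists a => i /= hi; split.
  by rewrite subKr.
case: a hi => [a [Ea [a0 ap]]] /= hi.
case: i hi => [b [Eb [b0 bp]]] /= _.
by apply: ltr bp (lpos (l0sub ap) (lrefl p)).
Qed.

Lemma H_sub H : sublattice le H -> regular le H -> order_dense_in le E H ->
  forall h, H h -> Ebar h.
Proof.
move=> hH rH dH h Hh.
pose p := vsup h 0.
have Hp : H p by apply: slsup => //; exact: sl0 hH.
have p0 : le 0 p by exact: sup_r (vsupP _ _).
have Hq : H (p - h) by exact: slsub.
have q0 : le 0 (p - h) by apply: l0sub; exact: sup_l (vsupP _ _).
have -> : h = p - (p - h) by rewrite subKr.
apply: Ebar_add; first exact: H_pos Hp p0.
by apply: Ebar_opp; exact: H_pos Hq q0.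
Qed.

End Proof9.

Theorem theorem9p1 (R : realType) (V : lmodType R) (le : V -> V -> Prop)
  (hVL : vector_lattice le) (hArch : archimedean le)
  (E : V -> Prop) (hE : sublattice le E) (hreg : regular le E) :
  [/\ sublattice le (order_adherence le E),
      regular le (order_adherence le E),
      order_dense_in le E (order_adherence le E) &
      forall H : V -> Prop, sublattice le H -> regular le H ->
        order_dense_in le E H ->
        forall h, H h -> order_adherence le E h].
Proof.
split.
- exact: Ebar_sl.
- exact: Ebar_reg.
- split; first exact: Ebar_E.
  exact: Ebar_dense.
- exact: H_sub.
Qed.
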